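(* Let $\varphi$ be an $\mathrm{LTL_{PSL}}$ formula and let $I$ be the set of subformulae of $\varphi$ of the form $s\preceq s'$. Then $\varphi$ is $\mathrm{SLTL}$-satisfiable if and only if there exists a partition $D=(I^+,I^-)$ of $I$ such that $\varphi_D$ is $\mathrm{SLTL}$-satisfiable, where $\varphi_D=\varphi[I^+\mapsto\top,I^-\mapsto\bot]\wedge\chi_D$, $\varphi[I^+\mapsto\top,I^-\mapsto\bot]$ is obtained from $\varphi$ by replacing each member of $I^+$ by $\top$ and each member of $I^-$ by $\bot$, and $\chi_D=G\Big(\bigwedge_{(s\preceq s')\in I^+}(s\preceq s')\wedge\bigwedge_{(s\preceq s')\in I^-}\big(\Diamond_s p_{s,s'}\wedge\neg\Diamond_{s'}p_{s,s'}\big)\Big)$ with each $p_{s,s'}$ a fresh propositional variable not occurring in $\varphi$.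
   Context: Fix a countably infinite set $\mathcal{P}$ of propositional variables and a countably infinite set $\mathcal{S}$ of standpoint symbols containing a distinguished universal standpoint symbol $*$. SLTL formulae: $\varphi ::= p \mid s \preceq s' \mid \neg\varphi \mid \varphi\wedge\varphi \mid \Diamond_s\varphi \mid \Box_s\varphi \mid X\varphi \mid \varphi\,U\,\varphi$ ($p\in\mathcal{P}$, $s,s'\in\mathcal{S}$). A model is $M=(\Pi,\lambda)$ with $\Pi\neq\emptyset$ a set of traces $\sigma:\mathbb{N}\to 2^{\mathcal{P}}$ and $\lambda:\mathcal{S}\to 2^{\Pi}\setminus\{\emptyset\}$, $\lambda( * )=\Pi$. Semantics: $M,\sigma,i\models p$ iff $p\in\sigma(i)$; $M,\sigma,i\models s\preceq s'$ iff $\lambda(s)\subseteq\lambda(s')$; Boolean clauses as usual; $M,\sigma,i\models\Diamond_s\psi$ iff $M,\sigma',i\models\psi$ for some $\sigma'\in\lambda(s)$; $\Box_s$ dually with ''for all''; $M,\sigma,i\models X\psi$ iff $M,\sigma,i+1\models\psi$; $M,\sigma,i\models\psi\,U\,\chi$ iff there is $i'\ge i$ with $M,\sigma,i'\models\chi$ and $M,\sigma,i''\models\psi$ for all $i\le i''<i'$. $G\psi$ abbreviates $\neg(\top\,U\,\neg\psi)$. $\varphi$ is satisfiable iff $M,\sigma,0\models\varphi$ for some $M=(\Pi,\lambda)$, $\sigma\in\Pi$. $\mathrm{LTL_{PSL}}$ is the fragment of SLTL consisting of formulae in which no temporal connective ($X$ or $U$) occurs in the scope of a standpoint modality $\Diamond_s$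 or $\Box_s$. *)

(* Defs.v *)
From mathcomp Require Import ssreflect ssrfun ssrbool eqtype ssrnat seq.
Set Implicit Arguments. Unset Strict Implicit. Unset Printing Implicit Defensive.

(* Propositional variables and standpoint symbols are both [nat]
   (countably infinite); the standpoint symbol [0] is the universal [*]. *)
Definition prop_var := nat.
Definition stp := nat.
Definition universal : stp := 0.

Inductive form : Type :=
  | Var   : prop_var -> form
  | Sharp : stp -> stp -> form
  | Neg   : form -> form
  | And   : form -> form -> form
  | Dia   : stp -> form -> form
  | Box   : stp -> form -> form
  | Next  : form -> form
  | Until : form -> form -> form.

Definition ftop : form := Neg (And (Var 0) (Neg (Var 0))).
Definition fbot : form := Neg ftop.
Definition G (f : form) : form := Neg (Until ftop (Neg f)).
Definition bigAnd (l : seq form) : form := foldr And ftop l.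

Definition trace := nat -> prop_var -> Prop.

Record model := Model {
  Pi : trace -> Prop;
  lam : stp -> trace -> Prop;
  Pi_nonempty : exists sg, Pi sg;
  lam_sub : forall s sg, lam s sg -> Pi sg;
  lam_nonempty : forall s, exists sg, lam s sg;
  lam_universal : forall sg, lam universal sg <-> Pi sg
}.

Fixpoint sat (M : model) (sg : trace) (i : nat) (f : form) : Prop :=
  match f with
  | Var p => sg i p
  | Sharp s s' => forall t, lam M s t -> lam M s' t
  | Neg g => ~ sat M sg i g
  | And g h => sat M sg i g /\ sat M sg i h
  | Dia s g => exists t, lam M s t /\ sat M t i g
  | Box s g => forall t, lam M s t -> sat M t i g
  | Next g => sat M sg i.+1 g
  | Until g h => exists i', i <= i' /\ sat M sg i' h /\
                   (forall i'', i <= i'' -> i'' < i' -> sat M sg i'' g)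
  end.

Definition satisfiable (f : form) : Prop :=
  exists (M : model) (sg : trace), Pi M sg /\ sat M sg 0 f.

Fixpoint temporal_free (f : form) : Prop :=
  match f with
  | Var _ | Sharp _ _ => True
  | Neg g | Dia _ g | Box _ g => temporal_free g
  | And g h => temporal_free g /\ temporal_free h
  | Next _ | Until _ _ => False
  end.

Fixpoint ltl_psl (f : form) : Prop :=
  match f with
  | Var _ | Sharp _ _ => True
  | Neg g | Next g => ltl_psl g
  | And g h | Until g h => ltl_psl g /\ ltl_psl h
  | Dia _ g | Box _ g => temporal_free g
  end.

Fixpoint sharps (f : form) : seq (stp * stp) :=
  match f with
  | Var _ => [::]
  | Sharp s s' => [:: (s, s')]
  | Neg g | Dia _ g | Box _ g | Next g => sharps g
  | And g h | Until g h => sharps g ++ sharps h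
  end.

Definition Iset (f : form) : seq (stp * stp) := undup (sharps f).

Fixpoint vars (f : form) : seq prop_var :=
  match f with
  | Var p => [:: p]
  | Sharp _ _ => [::]
  | Neg g | Dia _ g | Box _ g | Next g => vars g
  | And g h | Until g h => vars g ++ vars h
  end.

(* A partition D = (I+, I-) of I is given by its characteristic function
   [plus] on I: (s,s') ∈ I+ iff (s,s') ∈ I and plus (s,s'); I- = I \ I+. *)
Fixpoint subst_sharps (plus : stp * stp -> bool) (f : form) : form :=
  match f with
  | Var p => Var p
  | Sharp s s' => if plus (s, s') then ftop else fbot
  | Neg g => Neg (subst_sharps plus g)
  | And g h => And (subst_sharps plus g) (subst_sharps plus h)
  | Dia s g => Dia s (subst_sharps plus g)
  | Box s g => Box s (subst_sharps plus g)
  | Next g => Next (subst_sharps plus g)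
  | Until g h => Until (subst_sharps plus g) (subst_sharps plus h)
  end.

Definition chi (f : form) (plus : stp * stp -> bool)
    (pv : stp * stp -> prop_var) : form :=
  G (And
       (bigAnd [seq Sharp ss.1 ss.2 | ss <- Iset f & plus ss])
       (bigAnd [seq And (Dia ss.1 (Var (pv ss))) (Neg (Dia ss.2 (Var (pv ss))))
               | ss <- Iset f & ~~ plus ss])).

Definition phiD (f : form) (plus : stp * stp -> bool)
    (pv : stp * stp -> prop_var) : form :=
  And (subst_sharps plus f) (chi f plus pv).

(* Main.v *)
Require Import Defs.
From mathcomp Require Import ssreflect ssrfun ssrbool eqtype ssrnat seq.
From Stdlib Require Import Classical ClassicalEpsilon.

Lemma sat_ftop M t i : sat M t i ftop.
Proof. by move=> /= [a b]. Qed.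

Lemma sat_fbot M t i : ~ sat M t i fbot.
Proof. by move=> /= H; apply: H; apply: sat_ftop. Qed.

Lemma sat_bigAnd M t i (F : stp * stp -> form) (l : seq (stp * stp)) :
  sat M t i (bigAnd [seq F ss | ss <- l]) <-> forall ss, ss \in l -> sat M t i (F ss).
Proof.
elim: l => [|a l IH] /=; first by split=> // _; apply: sat_ftop.
split.
- move=> [Ha Hl] ss; rewrite inE => /orP [/eqP -> //|Hs]; by apply IH.
- move=> H; split; first by apply H; rewrite inE eqxx.
  apply IH => ss Hs; apply H; by rewrite inE Hs orbT.
Qed.

Lemma sat_G M t i X : sat M t i (G X) <-> forall j, i <= j -> sat M t j X.
Proof.
rewrite /G; split => /=.
- move=> H j Hj; apply NNPP => HX; apply H; exists j; split => //; split => //.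
  by move=> k _ _ [a b].
- move=> H [j [Hj [HX _]]]; apply: HX; exact: H.
Qed.

Lemma subst_fwd M M' (f : trace -> trace) (plus : stp * stp -> bool) (V : seq nat)
  (hV : forall t i q, q \in V -> f t i q = t i q)
  (hlam : forall s t', lam M' s t' <-> exists t, lam M s t /\ t' = f t)
  (hplus : forall ss, plus ss <-> (forall t, lam M ss.1 t -> lam M ss.2 t)) g :
  {subset vars g <= V} -> forall t i, sat M' (f t) i (subst_sharps plus g) <-> sat M t i g.
Proof.
elim: g => [p|s s'|g IH|g IHg h IHh|s g IH|s g IH|g IH|g IHg h IHh] /= HV t i.
- rewrite hV //; apply HV; by rewrite inE.
- have := hplus (s, s'); case: (plus (s, s')) => Hp.
  + split => _; first by apply Hp. apply: sat_ftop.
  + split; first by move=> Hb; case: (sat_fbot _ _ _ Hb). move=> H; by have := proj2 Hp H.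
- by rewrite IH.
- have H1 : {subset vars g <= V} by move=> x Hx; apply HV; rewrite mem_cat Hx.
  have H2 : {subset vars h <= V} by move=> x Hx; apply HV; rewrite mem_cat Hx orbT.
  by rewrite IHg // IHh.
- split.
  + move=> [t' [/hlam [u [Hu ->]] Hs]]; exists u; split => //; by rewrite -IH.
  + move=> [u [Hu Hs]]; exists (f u); split; first by apply/hlam; exists u.
    by rewrite IH.
- split.
  + move=> H u Hu; rewrite -IH //; apply H; apply/hlam; by exists u.
  + move=> H t' /hlam [u [Hu ->]]; rewrite IH //; by apply H.
- by rewrite IH.
- have H1 : {subset vars g <= V} by move=> x Hx; apply HV; rewrite mem_cat Hx.
  have H2 : {subset vars h <= V} by move=> x Hx; apply HV; rewrite mem_cat Hx orbT.
  split.
  + move=> [j [Hj [Hh Hg]]]; exists j; split => //; split; first by rewrite -IHh.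
    move=> k H3 H4; rewrite -IHg //; by apply Hg.
  + move=> [j [Hj [Hh Hg]]]; exists j; split => //; split; first by rewrite IHh.
    move=> k H3 H4; rewrite IHg //; by apply Hg.
Qed.

Lemma subst_bwd M (plus : stp * stp -> bool) g :
  (forall ss, ss \in sharps g -> ((forall t, lam M ss.1 t -> lam M ss.2 t) <-> plus ss)) ->
  forall t i, sat M t i (subst_sharps plus g) <-> sat M t i g.
Proof.
elim: g => [p|s s'|g IH|g IHg h IHh|s g IH|s g IH|g IH|g IHg h IHh] /= HS t i.
- by [].
- have := HS (s, s'); rewrite inE eqxx => /(_ isT) /=.
  case: (plus (s, s')) => Hp.
  + split => _; first by apply Hp. apply: sat_ftop.
  + split; first by move=> Hb; case: (sat_fbot _ _ _ Hb). move=> H; by have := proj1 Hp H.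
- by rewrite IH.
- have H1 : forall ss, ss \in sharps g -> _ := fun ss Hs => HS ss ltac:(by rewrite mem_cat Hs).
  have H2 : forall ss, ss \in sharps h -> _ := fun ss Hs => HS ss ltac:(by rewrite mem_cat Hs orbT).
  by rewrite IHg // IHh.
- split; move=> [u [Hu Hs]]; exists u; split => //; by [rewrite -IH | rewrite IH].
- split; move=> H u Hu; [rewrite -IH | rewrite IH] => //; by apply H.
- by rewrite IH.
- have H1 : forall ss, ss \in sharps g -> _ := fun ss Hs => HS ss ltac:(by rewrite mem_cat Hs).
  have H2 : forall ss, ss \in sharps h -> _ := fun ss Hs => HS ss ltac:(by rewrite mem_cat Hs orbT).
  split.
  + move=> [j [Hj [Hh Hg]]]; exists j; split => //; split; first by rewrite -IHh.
    move=> k H3 H4; rewrite -IHg //; by apply Hg.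
  + move=> [j [Hj [Hh Hg]]]; exists j; split => //; split; first by rewrite IHh.
    move=> k H3 H4; rewrite IHg //; by apply Hg.
Qed.

Theorem lemma3 (phi : form) (pv : stp * stp -> prop_var) :
  ltl_psl phi ->
  (* the p_{s,s'} are pairwise distinct ... *)
  {in Iset phi &, injective pv} ->
  (* ... and fresh: they do not occur in phi *)
  (forall ss, ss \in Iset phi -> pv ss \notin vars phi) ->
  satisfiable phi <->
  exists plus : stp * stp -> bool, satisfiable (phiD phi plus pv).
Proof.
move=> _ Hinj Hfresh; split.
- move=> [M [sg [Hsg Hphi]]].
  pose plus (ss : stp * stp) : bool :=
    if excluded_middle_informative (forall t, lam M ss.1 t -> lam M ss.2 t) then true else false.
  have hplus : forall ss, plus ss <-> (forall t, lam M ss.1 t -> lam M ss.2 t).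
    move=> ss; rewrite /plus; case: excluded_middle_informative => //.
  pose f (t : trace) : trace := fun i q =>
    if q \in vars phi then t i q
    else exists ss, ss \in Iset phi /\ pv ss = q /\ ~ lam M ss.2 t.
  have hV : forall t i q, q \in vars phi -> f t i q = t i q.
    by move=> t i q Hq; rewrite /f Hq.
  pose Pi' (t' : trace) := exists t, Pi M t /\ t' = f t.
  pose lam' s (t' : trace) := exists t, lam M s t /\ t' = f t.
  have P1 : exists sg, Pi' sg.
    by exists (f sg), sg.
  have P2 : forall s sg, lam' s sg -> Pi' sg.
    move=> s _ [t [Ht ->]]; exists t; split => //; exact: lam_sub Ht.
  have P3 : forall s, exists sg, lam' s sg.
    move=> s; have [t Ht] := lam_nonempty M s; by exists (f t), t.
  have P4 : forall sg, lam' universal sg <-> Pi' sg.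
    move=> t'; split; move=> [t [Ht ->]]; exists t; split => //; by apply/lam_universal.
  pose M' := Model P1 P2 P3 P4.
  exists plus, M', (f sg); split; first by exists sg.
  split.
  + rewrite (@subst_fwd M M' f plus (vars phi)) //.
  + apply/sat_G => j _; split.
    * apply/sat_bigAnd => ss; rewrite mem_filter => /andP [Hp _] /=.
      move=> _ [t [Ht ->]]; exists t; split => //; by apply hplus.
    * apply/sat_bigAnd => ss; rewrite mem_filter => /andP [Hp Hss] /=.
      have Hn : ~ (forall t, lam M ss.1 t -> lam M ss.2 t).
        by move=> H; move: Hp; have := proj2 (hplus ss) H => ->.
      have Hf := Hfresh ss Hss.
      split.
      -- have [t [Ht1 Ht2]] : exists t, lam M ss.1 t /\ ~ lam M ss.2 t.
           apply NNPP => H; apply Hn => t Ht; apply NNPP => H2; apply H; by exists t.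
         exists (f t); split; first by exists t.
         rewrite /f (negbTE Hf); by exists ss.
      -- move=> [t' [[u [Hu ->]]]]; rewrite /f (negbTE Hf).
         move=> [ss0 [Hss0 [Heq Hn0]]].
         have E := Hinj _ _ Hss0 Hss Heq; subst ss0; by apply Hn0.
- move=> [plus [M [sg [Hsg [Hphi Hchi]]]]].
  exists M, sg; split => //.
  rewrite -(@subst_bwd M plus) //.
  move=> ss Hss; have Hss' : ss \in Iset phi by rewrite mem_undup.
  have Hc : sat M sg 0 (chi phi plus pv) := Hchi. rewrite /chi in Hc; have [/sat_bigAnd Hpos /sat_bigAnd Hneg] := proj1 (sat_G _ _ _ _) Hc 0 (leqnn 0).
  case Hp: (plus ss); split => // H.
  + by have := Hpos ss; rewrite mem_filter Hp Hss' => /(_ isT).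
  + have := Hneg ss; rewrite mem_filter Hp Hss' => /(_ isT) /= [[t [Ht HpT]] HN].
    exfalso; apply HN; exists t; split => //; by apply H.
Qed.
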